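(* Let $\varepsilon\in(0,\varepsilon_0]$. Then for every $\alpha$ with $0<\alpha\le\varepsilon(1-\omega\varepsilon)$, one has $\mathbb D_\varepsilon\subset\mathbb D_\alpha$.
   Context: Let $\mathfrak I=(a,b)\subset\mathbb R$ be a bounded interval, $\mathcal H=L^2(\mathfrak I)$ with inner product $\langle\cdot,\cdot\rangle$ and norm $\|\cdot\|$. Let $A=-\partial_{xx}$ with domain $H^2(\mathfrak I)\cap H^1_0(\mathfrak I)$, $\lambda_1>0$ its first eigenvalue, $\mathcal H^r=D(A^{r/2})$, $\|u\|_r=\|A^{r/2}u\|$, $B=I+A$, and on $\mathcal H^r$ the inner product $(u,v)_r=\langle A^{(r-1)/2}B^{1/2}u,A^{(r-1)/2}B^{1/2}v\rangle$ with norm $|||u|||_r^2=\|u\|_{r-1}^2+\|u\|_r^2$. Set $\omega=\sqrt{(1+\lambda_1)/\lambda_1}$. Let $\mu:(0,\infty)\to[0,\infty)$, $\mu\not\equiv0$, nonincreasing, absolutely continuous, with $\kappa:=\int_0^\infty\mu(s)\,ds\in(0,\infty)$, $\int_0^\infty s\mu(s)\,ds=1$, $\lim_{s\to0^+}\mu(s)<\infty$, and $\mu'+\delta\mu\le0$ a.e. for some $\delta>0$. $\mathcal M=L^2_\mu(\mathbb R^+;\mathcal H^1)$ with norm $\|\eta\|_{\mathcal M}^2=\int_0^\infty\mu(s)\|\eta(s)\|_1^2ds$; $\mathbf H=\mathcal H^1\times\mathcal M$ with $\|(u,\eta)\|_{\mathbf H}^2=|||u|||_1^2+\|\eta\|_{\mathcal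 M}^2$. $T\eta=-\partial_s\eta$ with domain $\{\eta\in\mathcal M:\partial_s\eta\in\mathcal M,\ \lim_{s\to0}\|\eta(s)\|_1=0\}$. For $f\in L^2(\mathfrak I)$, $S(t)$ is the strongly continuous semigroup on $\mathbf H$ generated by $Bu_t+u_x+\int_0^\infty\mu(s)A\eta(s)\,ds+uu_x=f$, $\eta_t=T\eta+u$ (Dirichlet conditions on $u$), $S(t)z=(u(t),\eta^t)$. Let $F(x)=\int_a^xf(y)\,dy$ and for $\varepsilon>0$, $z=(u,\eta)\in\mathbf H$, $$\Lambda_\varepsilon(z)=\|z\|_{\mathbf H}^2+\frac2\kappa\int_0^\infty\mu(s)\langle F,\eta_x(s)\rangle\,ds+\frac2\kappa\|F\|^2-\frac{\varepsilon}{\sqrt\kappa}\int_0^\infty\mu(s)(u,\eta(s))_1\,ds.$$ Let $c_1,c_2,c_3>0$ and $\varepsilon_0\in(0,\frac1{2\omega})$ be constants depending only on $\mathfrak I,\mu$ such that for every $z\in\mathbf H$ and $\varepsilon\in(0,\varepsilon_0]$, $\mathcal L_\varepsilon(t)=\Lambda_\varepsilon(S(t)z)$ satisfies $\mathcal L_\varepsilon'+\varepsilon c_1\mathcal L_\varepsilon\le c_2\|F\|^2+c_3\varepsilon^2\mathcal L_\varepsilon^2$ for all $t\ge0$. Standing assumption: $\|F\|<\frac{c_1}{2\sqrt{c_2c_3}}$. Set $c_*=\sqrt{c_2/c_3}\,\big(\frac{c_1}{\sqrt{c_2c_3}}-\|F\|\big)>0$ and, for $\varepsilon>0$, $\mathbb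 D_\varepsilon=\{z\in\mathbf H:\Lambda_\varepsilon(z)\le c_*/\varepsilon\}$. *)

(* Defs.v *)
From HB Require Import structures.
From mathcomp Require Import all_boot all_order all_algebra.
From mathcomp Require Import all_classical all_reals all_analysis.
Set Implicit Arguments. Unset Strict Implicit. Unset Printing Implicit Defensive.
Import Order.TTheory GRing.Theory Num.Theory.
Import numFieldNormedType.Exports.
Local Open Scope classical_set_scope.
Local Open Scope ring_scope.

Section Defs.
Variable R : realType.
Local Notation leb := (@lebesgue_measure R).

Definition L2 (a b : R) (g : R -> R) : Prop :=
  measurable_fun `[a, b] g /\
  (\int[leb]_(x in `[a, b]) ((g x) ^+ 2)%:E < +oo)%E.

Definition ip (a b : R) (g h : R -> R) : R := Rintegral leb `[a, b] (fun x => g x * h x).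
Definition nrm2 (a b : R) (g : R -> R) : R := ip a b g g.

(* u is in H^1 = D(A^{1/2}) = H^1_0(a,b), with (weak) derivative du:
   u is the primitive of an L^2 function du vanishing at a and b. *)
Definition H10 (a b : R) (u du : R -> R) : Prop :=
  L2 a b du /\
  (forall x, a <= x <= b -> u x = Rintegral leb `[a, x] du) /\
  Rintegral leb `[a, b] du = 0.

(* |||u|||_1^2 = ||u||_0^2 + ||u||_1^2, with ||u||_1 = ||A^{1/2} u|| = ||u_x|| *)
Definition tnorm1sq (a b : R) (u du : R -> R) : R := nrm2 a b u + nrm2 a b du.

(* (u,v)_1 = <B^{1/2}u, B^{1/2}v> = <u,v> + <u_x,v_x> *)
Definition ip1 (a b : R) (u du v dv : R -> R) : R := ip a b u v + ip a b du dv.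

(* first eigenvalue of -d^2/dx^2 with Dirichlet conditions on (a,b) *)
Definition lambda1 (a b : R) : R := (pi / (b - a)) ^+ 2.
Definition omega (a b : R) : R := Num.sqrt ((1 + lambda1 a b) / lambda1 a b).

Definition kappa (mu : R -> R) : R := Rintegral leb `]0, +oo[ mu.

Definition primF (a : R) (f : R -> R) : R -> R := fun x => Rintegral leb `[a, x] f.

(* A point z = (u, eta) of H = H^1 x M, given by representatives:
   u with derivative du, and eta(s) with derivative deta(s) for s > 0. *)
Record state := State {
  st_u : R -> R; st_du : R -> R;
  st_eta : R -> R -> R; st_deta : R -> R -> R }.

Definition normMsq (mu : R -> R) (a b : R) (z : state) : R :=
  Rintegral leb `]0, +oo[ (fun s => mu s * nrm2 a b (st_deta z s)).

(* membership z in H = H^1 x L^2_mu(R^+; H^1) *)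
Definition inH (mu : R -> R) (a b : R) (z : state) : Prop :=
  H10 a b (st_u z) (st_du z) /\
  (forall s, 0 < s -> H10 a b (st_eta z s) (st_deta z s)) /\
  measurable_fun ([set s : R | 0 < s] `*` `[a, b]) (fun p : R * R => st_eta z p.1 p.2) /\
  measurable_fun ([set s : R | 0 < s] `*` `[a, b]) (fun p : R * R => st_deta z p.1 p.2) /\
  (\int[leb]_(s in `]0%R, +oo[) (mu s * nrm2 a b (st_deta z s))%:E < +oo)%E.

Definition normHsq (mu : R -> R) (a b : R) (z : state) : R :=
  tnorm1sq a b (st_u z) (st_du z) + normMsq mu a b z.

Definition Lambda (mu : R -> R) (a b : R) (f : R -> R) (eps : R) (z : state) : R :=
  let F := primF a f in
  let k := kappa mu in
  normHsq mu a b z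
  + 2 / k * Rintegral leb `]0, +oo[ (fun s => mu s * ip a b F (st_deta z s))
  + 2 / k * nrm2 a b F
  - eps / Num.sqrt k *
      Rintegral leb `]0, +oo[
        (fun s => mu s * ip1 a b (st_u z) (st_du z) (st_eta z s) (st_deta z s)).

Definition normF (a b : R) (f : R -> R) : R := Num.sqrt (nrm2 a b (primF a f)).

Definition cstar (a b : R) (f : R -> R) (c1 c2 c3 : R) : R :=
  Num.sqrt (c2 / c3) * (c1 / Num.sqrt (c2 * c3) - normF a b f).

Definition Dset (mu : R -> R) (a b : R) (f : R -> R) (c1 c2 c3 eps : R) : set state :=
  [set z | inH mu a b z /\ Lambda mu a b f eps z <= cstar a b f c1 c2 c3 / eps].

Definition abs_cont_on (g : R -> R) (x y : R) : Prop :=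
  forall e, 0 < e -> exists2 d, 0 < d &
    forall n (ab : 'I_n -> R * R),
      (forall i, x <= (ab i).1 <= (ab i).2 /\ (ab i).2 <= y) ->
      (forall i j : 'I_n, (i < j)%N -> (ab i).2 <= (ab j).1) ->
      \sum_(i < n) ((ab i).2 - (ab i).1) < d ->
      \sum_(i < n) `|g (ab i).2 - g (ab i).1| < e.

Definition kernel_ok (mu : R -> R) (delta : R) : Prop :=
  (forall s, 0 < s -> 0 <= mu s) /\
  (forall s t, 0 < s -> s <= t -> mu t <= mu s) /\
  (forall x y, 0 < x -> x <= y -> abs_cont_on mu x y) /\
  leb.-integrable `]0, +oo[ (fun s => (mu s)%:E) /\ 0 < kappa mu /\
  leb.-integrable `]0, +oo[ (fun s => (s * mu s)%:E) /\
  Rintegral leb `]0, +oo[ (fun s => s * mu s) = 1 /\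
  (exists l : R, mu x @[x --> 0^'+] --> l) /\
  0 < delta /\
  {ae leb, forall s, 0 < s -> derivable mu s 1 /\ derive1 mu s + delta * mu s <= 0}.

End Defs.

(* Main.v *)
Require Import Defs.
From HB Require Import structures.
From mathcomp Require Import all_boot all_order all_algebra.
From mathcomp Require Import all_classical all_reals all_analysis.
From mathcomp Require Import ring lra measurable_realfun.
Import Order.TTheory GRing.Theory Num.Theory.
Import numFieldNormedType.Exports.
Local Open Scope classical_set_scope.
Local Open Scope ring_scope.
Section G.
Context d (T : measurableType d) (R : realType) (mu : {measure set T -> \bar R}).

Lemma le_integral_gen D (f g : T -> \bar R) :
  (forall x, D x -> (0 <= f x)%E) -> (forall x, D x -> (f x <= g x)%E) ->
  (\int[mu]_(x in D) f x <= \int[mu]_(x in D) g x)%E.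
Proof.
move=> f0 fg; rewrite !ge0_integralE//; last first.
  by move=> x Dx; exact: le_trans (f0 x Dx) (fg x Dx).
apply: ereal_sup_le => _ [h /= hf <-]; exists h => //= x.
apply: le_trans (hf x) _; rewrite /patch; case: ifPn => [/set_mem Dx|_]//.
exact: fg.
Qed.

Lemma Rint_abs_le D (g h : T -> R) : measurable D ->
  mu.-integrable D (EFin \o h) -> (forall x, D x -> `|g x| <= h x) ->
  `|Rintegral mu D g| <= Rintegral mu D h.
Proof.
move=> mD ih gh.
have h0 x : D x -> 0 <= h x by move=> Dx; exact: le_trans (normr_ge0 _) (gh x Dx).
have I0 : (0 <= \int[mu]_(x in D) (h x)%:E)%E by apply: integral_ge0 => x Dx; rewrite lee_fin h0.
have If : (\int[mu]_(x in D) (h x)%:E)%E \is a fin_num by exact: integrable_fin_num.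
have pI : (\int[mu]_(x in D) ((EFin \o g)^\+ x) <= \int[mu]_(x in D) (h x)%:E)%E.
  apply: le_integral_gen => x Dx //.
  rewrite funeposE /= ge_max !lee_fin (h0 _ Dx) andbT.
  exact: le_trans (ler_norm _) (gh x Dx).
have nI : (\int[mu]_(x in D) ((EFin \o g)^\- x) <= \int[mu]_(x in D) (h x)%:E)%E.
  apply: le_integral_gen => x Dx //.
  rewrite funenegE /= ge_max !lee_fin (h0 _ Dx) andbT.
  apply: le_trans _ (gh x Dx); rewrite -normrN; exact: ler_norm.
have p0 : (0 <= \int[mu]_(x in D) ((EFin \o g)^\+ x))%E by apply: integral_ge0 => x _; exact: funepos_ge0.
have n0 : (0 <= \int[mu]_(x in D) ((EFin \o g)^\- x))%E by apply: integral_ge0 => x _; exact: funeneg_ge0.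
rewrite /Rintegral integralE.
move: pI nI p0 n0 If I0.
set P := (\int[mu]_(x in D) _ )%E; set N := (\int[mu]_(x in D) _ )%E; set I := (\int[mu]_(x in D) _ )%E.
move: P N I => [P| |] [N| |] [I| |] //=; rewrite ?lee_fin => *.
by apply/ler_normlP; split; lra.
Qed.
End G.
Section Int.
Context d (T : measurableType d) (R : realType) (mu : {measure set T -> \bar R}).
Implicit Types (D : set T) (f g : T -> R).
Definition Iab (D : set T) (f : T -> R) := mu.-integrable D (EFin \o f).

Lemma iD D f g : measurable D -> Iab D f -> Iab D g -> Iab D (fun x => f x + g x).
Proof.
move=> mD If Ig; apply: (eq_integrable mD _ _ _ (integrableD mD If Ig)) => x _ /=; by rewrite EFinD.
Qed.

Lemma iZ D f k : measurable D -> Iab D f -> Iab D (fun x => k * f x).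
Proof.
move=> mD If; apply: (eq_integrable mD _ _ _ (integrableZl mD k If)) => x _ /=; by rewrite EFinM.
Qed.

Lemma ile D f g : measurable D -> measurable_fun D f ->
  (forall x, D x -> `|f x| <= g x) -> Iab D g -> Iab D f.
Proof.
move=> mD mf fg Ig; apply: (le_integrable mD _ _ Ig).
  exact/measurable_EFinP.
move=> x Dx /=; rewrite lee_fin; apply: le_trans (fg x Dx) _.
exact: ler_norm.
Qed.

Lemma icst D c : measurable D -> (mu D < +oo)%E -> Iab D (fun _ => c).
Proof.
move=> mD muD; apply/integrableP; split; first exact/measurable_EFinP.
rewrite (@eq_integral _ _ _ mu D (cst `|c|%:E)); last by [].
by rewrite integral_cst// lte_mul_pinfty.
Qed.

Lemma Rint_cst D c : measurable D -> Rintegral mu D (fun _ => c) = c * fine (mu D).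
Proof. by move=> mD; rewrite Rintegral_cst. Qed.
End Int.
Arguments Iab {d T R} mu D f.
Arguments iD {d T R mu D} f g.
Arguments iZ {d T R mu D} f k.
Arguments ile {d T R mu D} f g.
Arguments icst {d T R mu D} c.

Lemma amgm_pt {R : realType} (x y t : R) : 0 < t -> `|x * y| <= (t * x ^+ 2 + y ^+ 2 / t) / 2.
Proof.
move=> t0; rewrite normrM -(real_normK (num_real x)) -(real_normK (num_real y)).
have X0 := normr_ge0 x; have Y0 := normr_ge0 y.
move: `|x| `|y| X0 Y0 => X Y X0 Y0.
have h : 0 <= (t * X - Y) ^+ 2 / t by apply: divr_ge0; [exact: sqr_ge0|exact: ltW].
have -> : (t * X ^+ 2 + Y ^+ 2 / t) / 2 = X * Y + (t * X - Y) ^+ 2 / t / 2.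
  by field; rewrite gt_eqF.
lra.
Qed.

Lemma amgm_pt1 {R : realType} (x y : R) : `|x * y| <= 2^-1 * (x ^+ 2 + y ^+ 2).
Proof.
apply: le_trans (@amgm_pt R x y 1 ltr01) _.
by rewrite le_eqVlt; apply/orP; left; apply/eqP; field.
Qed.
Section L2s.
Context {R : realType}.
Local Notation leb := (@lebesgue_measure R).
Implicit Types (a b : R) (g h : R -> R).

Lemma leb_itv_fin (x y : R) bl br :
  (leb [set` Interval (BSide bl x) (BSide br y)] < +oo)%E.
Proof. by rewrite lebesgue_measure_itv; case: ifP => //= _; rewrite -EFinD ltey. Qed.

Lemma leb_itv_val (x y : R) bl br : x <= y ->
  fine (leb [set` Interval (BSide bl x) (BSide br y)]) = y - x.
Proof.
move=> xy; rewrite lebesgue_measure_itv /= lte_fin.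
case: ifPn => [xy'|]; first by rewrite -EFinD.
rewrite -leNgt => yx; have -> : y = x by apply/eqP; rewrite eq_le yx xy.
by rewrite subrr.
Qed.

Lemma L2_sq a b g : L2 a b g -> Iab leb `[a, b] (fun x => g x ^+ 2).
Proof.
move=> [mg fg]; apply/integrableP; split.
  by apply/measurable_EFinP; exact: measurable_funX.
rewrite (@eq_integral _ _ _ leb `[a, b] (fun x => (g x ^+ 2)%:E)) //.
by move=> x _ /=; rewrite ger0_norm // sqr_ge0.
Qed.

Lemma L2_int a b g : L2 a b g -> Iab leb `[a, b] g.
Proof.
move=> L; have [mg _] := L.
apply: (@ile _ _ _ leb _ g (fun x => 1 + g x ^+ 2)) => //.
  move=> x _; have [h1|h1] := lerP `|g x| 1.
    by apply: le_trans h1 _; rewrite lerDl sqr_ge0.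
  rewrite -(real_normK (num_real (g x))); nra.
apply: iD => //; first exact: icst (leb_itv_fin _ _ _ _).
exact: L2_sq.
Qed.

Lemma L2_mul a b g h : L2 a b g -> L2 a b h -> Iab leb `[a, b] (fun x => g x * h x).
Proof.
move=> Lg Lh; have [mg _] := Lg; have [mh _] := Lh.
apply: (@ile _ _ _ leb _ _ (fun x => 2^-1 * (g x ^+ 2 + h x ^+ 2))) => //.
  exact: measurable_funM.
  move=> x _; exact: amgm_pt1.
apply: iZ => //; apply: iD => //; exact: L2_sq.
Qed.

Lemma nrm2_ge0 a b g : 0 <= nrm2 a b g.
Proof. by apply: Rintegral_ge0 => x _; rewrite -expr2 sqr_ge0. Qed.

Lemma ip_amgm a b g h t : L2 a b g -> L2 a b h -> 0 < t ->
  `|ip a b g h| <= (t * nrm2 a b g + nrm2 a b h / t) / 2.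
Proof.
move=> Lg Lh t0; rewrite /ip /nrm2 /ip.
apply: le_trans.
  apply: (@Rint_abs_le _ _ _ leb _ _ (fun x => t / 2 * (g x * g x) + 1 / (2 * t) * (h x * h x))) => //.
    apply: iD => //; apply: iZ => //; idtac;
    [exact: L2_sq Lg|exact: L2_sq Lh].
  move=> x _; apply: le_trans (@amgm_pt R (g x) (h x) t t0) _; rewrite le_eqVlt; apply/orP; left; apply/eqP.
  by rewrite !expr2; field; rewrite gt_eqF.
rewrite RintegralD //; last 2 first.
  by apply: iZ => //; idtac; exact: L2_sq Lg.
  by apply: iZ => //; idtac; exact: L2_sq Lh.
rewrite RintegralZl //; last exact: L2_sq Lg.
rewrite RintegralZl //; last exact: L2_sq Lh.
by rewrite le_eqVlt; apply/orP; left; apply/eqP; field; rewrite gt_eqF.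
Qed.
End L2s.
Arguments L2_sq {R a b g}.
Arguments L2_int {R a b g}.
Arguments L2_mul {R a b g h}.
Arguments ip_amgm {R a b g h t}.
Section Prim.
Context {R : realType}.
Local Notation leb := (@lebesgue_measure R).
Implicit Types (a b : R) (g h : R -> R).

Lemma Rint_subset (A B : set R) f : measurable A -> measurable B -> A `<=` B ->
  (forall x, B x -> 0 <= f x) -> Iab leb B f ->
  Rintegral leb A f <= Rintegral leb B f.
Proof.
move=> mA mB AB f0 If.
have IA : Iab leb A f by exact: integrableS If.
rewrite /Rintegral fine_le //.
- exact: integrable_fin_num.
- exact: integrable_fin_num.
apply: ge0_subset_integral => //.
  by case/integrableP: If.
Qed.

Lemma L2_of a b g : measurable_fun `[a, b] g -> Iab leb `[a, b] (fun x => g x ^+ 2) -> L2 a b g.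
Proof.
move=> mg /integrableP [_ Ig]; split => //.
apply: le_lt_trans Ig; rewrite le_eqVlt; apply/orP; left; apply/eqP.
by apply: eq_integral => x _ /=; rewrite ger0_norm // sqr_ge0.
Qed.

Lemma prim_L2 a b g G : a < b -> L2 a b g ->
  (forall x, a <= x <= b -> G x = Rintegral leb `[a, x] g) -> L2 a b G.
Proof.
move=> ab Lg GE.
have Ig := L2_int Lg.
have mG : measurable_fun `[a, b] G.
  apply: (eq_measurable_fun (fun x => parameterized_integral leb a x g)).
    by move=> x /set_mem /= xab; rewrite GE //; move: xab; rewrite /= in_itv.
  apply: (@subspace_continuous_measurable_fun R `[a, b] (fun x => parameterized_integral leb a x g)) => //.
  exact: parameterized_integral_continuous (ltW ab) Ig.
pose M := Rintegral leb `[a, b] (fun x => `|g x|).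
apply: L2_of => //.
apply: (@ile _ _ _ leb _ _ (fun _ => M ^+ 2)) => //.
- exact: measurable_funX.
- move=> x /= xab; have /andP[ax xb] : a <= (x : R) <= b by move: xab; rewrite in_itv.
  rewrite ger0_norm ?sqr_ge0 // GE ?ax ?xb //.
  set I := Rintegral leb `[a, x] g.
  have H : `|I| <= M.
    apply: le_trans (le_normr_Rintegral _ _) _ => //.
      by apply: integrableS Ig => //; apply: subset_itvl; rewrite bnd_simp.
    apply: Rint_subset => //.
    + by apply: subset_itvl; rewrite bnd_simp.
    + exact: (integrable_norm Ig).
  rewrite -(real_normK (num_real I)); apply: lerXn2r => //; rewrite nnegrE //.
  exact: le_trans (normr_ge0 _) H.
- exact: icst (leb_itv_fin _ _ _ _).
Qed.
End Prim.
Arguments prim_L2 {R a b g G}.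
Section CS.
Context {R : realType}.
Local Notation leb := (@lebesgue_measure R).
Implicit Types (a b : R) (g h : R -> R).

Lemma CS_sub a b (D E : set R) g l : measurable D -> measurable E ->
  D `<=` E -> E `<=` `[a, b] -> L2 a b g -> 0 < l ->
  (leb D < +oo)%E -> fine (leb D) <= l ->
  (Rintegral leb D g) ^+ 2 <= l * Rintegral leb E (fun x => g x * g x).
Proof.
move=> mD mE DE Eab Lg l0 Dfin Dl.
have IgE : Iab leb E g by apply: integrableS (L2_int Lg).
have Ig2E : Iab leb E (fun x => g x * g x) by apply: integrableS (L2_sq Lg).
have IgD : Iab leb D g by apply: integrableS IgE.
have Ig2D : Iab leb D (fun x => g x * g x) by apply: integrableS Ig2E.
set G := Rintegral leb D g.
set c := G / l.
have m0 : 0 <= fine (leb D) by apply: fine_ge0.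
have key : 0 <= Rintegral leb D (fun x => g x * g x) - 2 * c * G + c ^+ 2 * fine (leb D).
  have -> : Rintegral leb D (fun x => g x * g x) - 2 * c * G + c ^+ 2 * fine (leb D)
          = Rintegral leb D (fun x => (g x - c) ^+ 2).
    have E1 : Rintegral leb D (fun x => (g x - c) ^+ 2) =
       Rintegral leb D (fun x => g x * g x + ((- (2 * c)) * g x + c ^+ 2)).
      by apply: eq_Rintegral => x _; rewrite sqrrB; ring.
    rewrite E1.
    rewrite RintegralD //; last by apply: iD => //; [apply: iZ|apply: icst].
    rewrite RintegralD //; [|by apply: iZ|by apply: icst].
    rewrite RintegralZl // Rint_cst //.
    rewrite /G; ring.
  by apply: Rintegral_ge0 => x _; exact: sqr_ge0.
have NDE : Rintegral leb D (fun x => g x * g x) <= Rintegral leb E (fun x => g x * g x).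
  by apply: Rint_subset => // x _; rewrite -expr2 sqr_ge0.
have cl : c ^+ 2 * fine (leb D) <= c ^+ 2 * l by apply: ler_wpM2l => //; exact: sqr_ge0.
have H : 0 <= Rintegral leb E (fun x => g x * g x) - G ^+ 2 / l.
  have -> : G ^+ 2 / l = 2 * c * G - c ^+ 2 * l by rewrite /c; field; rewrite gt_eqF.
  lra.
rewrite -subr_ge0; have -> : l * Rintegral leb E (fun x => g x * g x) - G ^+ 2
  = l * (Rintegral leb E (fun x => g x * g x) - G ^+ 2 / l) by field; rewrite gt_eqF.
by apply: mulr_ge0 => //; exact: ltW.
Qed.
End CS.
Arguments CS_sub {R a b D E g l}.
Section Poinc.
Context {R : realType}.
Local Notation leb := (@lebesgue_measure R).
Implicit Types (a b : R) (g h : R -> R).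

Lemma split_itv {a b x f} : a <= x -> x <= b -> Iab leb `[a, b] f ->
  Rintegral leb `[a, b] f = Rintegral leb `[a, x] f + Rintegral leb `]x, b] f.
Proof.
move=> ax xb If.
have E : `[a, b]%classic = `[a, x]%classic `|` `]x, b]%classic :> set R.
  by apply: itv_bndbnd_setU; rewrite bnd_simp.
rewrite E Rintegral_setU //; first by rewrite -E.
apply: lt_disjoint => y z; rewrite !in_itv /= => /andP[_ yx] /andP[xz _].
exact: le_lt_trans yx xz.
Qed.

Lemma H10_L2 {a b u du} : a < b -> H10 a b u du -> L2 a b u.
Proof. by move=> ab [Ld [uE _]]; apply: prim_L2 ab Ld uE. Qed.

Lemma split_itv2 {a b x f} : a <= x -> x <= b -> Iab leb `]a, b] f ->
  Rintegral leb `]a, b] f = Rintegral leb `]a, x] f + Rintegral leb `]x, b] f.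
Proof.
move=> ax xb If.
have E : `]a, b]%classic = `]a, x]%classic `|` `]x, b]%classic :> set R.
  by apply: itv_bndbnd_setU; rewrite bnd_simp.
rewrite E Rintegral_setU //; first by rewrite -E.
apply: lt_disjoint => y z; rewrite !in_itv /= => /andP[_ yx] /andP[xz _].
exact: le_lt_trans yx xz.
Qed.

Lemma piece (P : set R) g M : measurable P -> (leb P < +oo)%E ->
  Iab leb P g -> (forall x, P x -> g x <= M) ->
  Rintegral leb P g <= M * fine (leb P).
Proof.
move=> mP Pf Ig gM; rewrite -Rint_cst //.
by apply: le_Rintegral => //; apply: icst.
Qed.

Lemma poincare a b u du : a < b -> H10 a b u du ->
  nrm2 a b u <= 3 * (b - a) ^+ 2 / 16 * nrm2 a b du.
Proof.
move=> ab H; have Lu := H10_L2 ab H; have [Ld [uE u0]] := H.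
set l := (b - a) / 4.
set q1 := a + l; set m := a + 2 * l; set q3 := a + 3 * l.
have l0 : 0 < l by rewrite /l divr_gt0 // subr_gt0.
have bE : b = a + 4 * l by rewrite /l; field.
have aq1 : a <= q1 by rewrite /q1; lra.
have q1m : q1 <= m by rewrite /q1 /m; lra.
have mq3 : m <= q3 by rewrite /m /q3; lra.
have q3b : q3 <= b by rewrite /q3 bE; lra.
have am : a <= m by lra.
have mb : m <= b by lra.
have q1b : q1 <= b by lra.
have aq3 : a <= q3 by lra.
have Iu2 := L2_sq Lu; have Id2 := L2_sq Ld.
have Iuu : Iab leb `[a, b] (fun x => u x * u x) by exact: Iu2.
have Idd : Iab leb `[a, b] (fun x => du x * du x) by exact: Id2.
have sub1 : forall (i : interval R), ([set` i] `<=` `[a, b]) -> Iab leb [set` i] (fun x => du x * du x).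
  by move=> i iab; apply: integrableS Idd.
have sub2 : forall (i : interval R), ([set` i] `<=` `[a, b]) -> Iab leb [set` i] (fun x => u x * u x).
  by move=> i iab; apply: integrableS Iuu.
have nn : forall (i : interval R), 0 <= Rintegral leb [set` i] (fun x => du x * du x).
  by move=> i; apply: Rintegral_ge0 => x _; rewrite -expr2 sqr_ge0.
set Na1 := Rintegral leb `[a, q1] (fun x => du x * du x).
set N1m := Rintegral leb `]q1, m] (fun x => du x * du x).
set Nm3 := Rintegral leb `]m, q3] (fun x => du x * du x).
set N3b := Rintegral leb `]q3, b] (fun x => du x * du x).
have eL : forall x, a <= x <= b -> u x = Rintegral leb `[a, x] du.
  by move=> x /andP[ax xb]; rewrite uE ?ax ?xb.
have eR : forall x, a <= x <= b -> u x = - Rintegral leb `]x, b] du.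
  move=> x /andP[ax xb]; have := split_itv ax xb (L2_int Ld).
  by rewrite u0 -uE ?ax ?xb // => e; lra.
have Nam : Rintegral leb `[a, m] (fun x => du x * du x) = Na1 + N1m.
  by rewrite (split_itv aq1 q1m) //; apply: sub1; apply: subset_itv; rewrite bnd_simp.
have Nmb : Rintegral leb `]m, b] (fun x => du x * du x) = Nm3 + N3b.
  by rewrite (split_itv2 mq3 q3b) //; apply: sub1; apply: subset_itv; rewrite bnd_simp.
have NE : nrm2 a b du = Na1 + N1m + Nm3 + N3b.
  by rewrite /nrm2 /ip (split_itv am mb Idd) Nam Nmb addrA.
have Buu : forall (D E : set R) x, measurable D -> measurable E -> D `<=` E -> E `<=` `[a, b] ->
    (leb D < +oo)%E -> fine (leb D) <= 2 * l ->
    (u x = Rintegral leb D du \/ u x = - Rintegral leb D du) ->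
    u x * u x <= 2 * l * Rintegral leb E (fun x => du x * du x).
  move=> D E x mD mE DE Eab Df Dl ux.
  have -> : u x * u x = (Rintegral leb D du) ^+ 2.
    by case: ux => ->; rewrite expr2 // mulrNN.
  by apply: (@CS_sub _ a b) => //; rewrite pmulr_rgt0.
have Buu1 : forall (D E : set R) x, measurable D -> measurable E -> D `<=` E -> E `<=` `[a, b] ->
    (leb D < +oo)%E -> fine (leb D) <= l ->
    (u x = Rintegral leb D du \/ u x = - Rintegral leb D du) ->
    u x * u x <= l * Rintegral leb E (fun x => du x * du x).
  move=> D E x mD mE DE Eab Df Dl ux.
  have -> : u x * u x = (Rintegral leb D du) ^+ 2.
    by case: ux => ->; rewrite expr2 // mulrNN.
  by apply: (@CS_sub _ a b).
have P1 : Rintegral leb `[a, q1] (fun x => u x * u x) <= l * Na1 * fine (leb `[a, q1]).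
  apply: piece => //; [exact: leb_itv_fin|apply: sub2; apply: subset_itv; rewrite bnd_simp //|].
  move=> x /=; rewrite in_itv /= => /andP[ax xq1].
  apply: (Buu1 `[a, x]%classic `[a, q1]%classic x) => //.
  - by apply: subset_itv; rewrite bnd_simp.
  - by apply: subset_itv; rewrite bnd_simp.
  - exact: leb_itv_fin.
  - by rewrite leb_itv_val //; move: xq1; rewrite /q1; lra.
  - by left; apply: eL; rewrite ax /= (le_trans xq1) // (le_trans q1m).
have P2 : Rintegral leb `]q1, m] (fun x => u x * u x) <= 2 * l * (Na1 + N1m) * fine (leb `]q1, m]).
  apply: piece => //; [exact: leb_itv_fin|apply: sub2; apply: subset_itv; rewrite bnd_simp //|].
  move=> x /=; rewrite in_itv /= => /andP[q1x xm]; rewrite -Nam.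
  apply: (Buu `[a, x]%classic `[a, m]%classic x) => //.
  - by apply: subset_itv; rewrite bnd_simp.
  - by apply: subset_itv; rewrite bnd_simp.
  - exact: leb_itv_fin.
  - by rewrite leb_itv_val; move: xm; rewrite /m; lra.
  - by left; apply: eL; apply/andP; split; lra.
have P3 : Rintegral leb `]m, q3] (fun x => u x * u x) <= 2 * l * (Nm3 + N3b) * fine (leb `]m, q3]).
  apply: piece => //; [exact: leb_itv_fin|apply: sub2; apply: subset_itv; rewrite bnd_simp //|].
  move=> x /=; rewrite in_itv /= => /andP[mx xq3]; rewrite -Nmb.
  apply: (Buu `]x, b]%classic `]m, b]%classic x) => //.
  - by apply: subset_itv; rewrite bnd_simp // ltW.
  - by apply: subset_itv; rewrite bnd_simp.
  - exact: leb_itv_fin.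
  - by rewrite leb_itv_val; move: mx; rewrite bE /m; lra.
  - by right; apply: eR; apply/andP; split; lra.
have P4 : Rintegral leb `]q3, b] (fun x => u x * u x) <= l * N3b * fine (leb `]q3, b]).
  apply: piece => //; [exact: leb_itv_fin|apply: sub2; apply: subset_itv; rewrite bnd_simp //|].
  move=> x /=; rewrite in_itv /= => /andP[q3x xb].
  apply: (Buu1 `]x, b]%classic `]q3, b]%classic x) => //.
  - by apply: subset_itv; rewrite bnd_simp // ltW.
  - by apply: subset_itv; rewrite bnd_simp.
  - exact: leb_itv_fin.
  - by rewrite leb_itv_val; move: q3x; rewrite bE /q3; lra.
  - by right; apply: eR; apply/andP; split; lra.
have Uam : Rintegral leb `[a, m] (fun x => u x * u x) =
    Rintegral leb `[a, q1] (fun x => u x * u x) + Rintegral leb `]q1, m] (fun x => u x * u x).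
  by rewrite (split_itv aq1 q1m) //; apply: sub2; apply: subset_itv; rewrite bnd_simp.
have Umb : Rintegral leb `]m, b] (fun x => u x * u x) =
    Rintegral leb `]m, q3] (fun x => u x * u x) + Rintegral leb `]q3, b] (fun x => u x * u x).
  by rewrite (split_itv2 mq3 q3b) //; apply: sub2; apply: subset_itv; rewrite bnd_simp.
have UE : nrm2 a b u = Rintegral leb `[a, m] (fun x => u x * u x) + Rintegral leb `]m, b] (fun x => u x * u x).
  by rewrite /nrm2 /ip (split_itv am mb Iuu).
move: P1 P2 P3 P4; rewrite !leb_itv_val // UE Uam Umb NE.
have -> : q1 - a = l by rewrite /q1; ring.
have -> : m - q1 = l by rewrite /m /q1; ring.
have -> : q3 - m = l by rewrite /q3 /m; ring.
have -> : b - q3 = l by rewrite bE /q3; ring.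
have -> : 3 * (b - a) ^+ 2 / 16 = 3 * (l * l) by rewrite bE; field.
have := nn `[a, q1]; have := nn `]q1, m]; have := nn `]m, q3]; have := nn `]q3, b].
rewrite -/Na1 -/N1m -/Nm3 -/N3b.
have ll : 0 <= l * l by rewrite mulr_ge0 // ltW.
move=> h1 h2 h3 h4 p1 p2 p3 p4.
have q1' := mulr_ge0 ll h1; have q2' := mulr_ge0 ll h2.
have q3' := mulr_ge0 ll h3; have q4' := mulr_ge0 ll h4.
have e1 : l * Na1 * l = (l * l) * Na1 by ring.
have e2 : 2 * l * (Na1 + N1m) * l = 2 * ((l * l) * Na1) + 2 * ((l * l) * N1m) by ring.
have e3 : 2 * l * (Nm3 + N3b) * l = 2 * ((l * l) * Nm3) + 2 * ((l * l) * N3b) by ring.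
have e4 : l * N3b * l = (l * l) * N3b by ring.
have e5 : 3 * (l * l) * (Na1 + N1m + Nm3 + N3b) =
  3 * ((l * l) * Na1) + 3 * ((l * l) * N1m) + 3 * ((l * l) * Nm3) + 3 * ((l * l) * N3b) by ring.
rewrite e5; rewrite e1 in p1; rewrite e2 in p2; rewrite e3 in p3; rewrite e4 in p4.
lra.
Qed.
End Poinc.
Arguments poincare {R a b u du}.
Section Meas.
Context {R : realType}.
Local Notation leb := (@lebesgue_measure R).

Lemma n_meas (a b : R) (h : R -> R -> R) :
  measurable_fun ([set s : R | 0 < s] `*` `[a, b]) (fun p : R * R => h p.1 p.2) ->
  measurable_fun (`]0%R, +oo[%classic : set R) (fun s => nrm2 a b (h s)).
Proof.
move=> mh.
have mP : measurable ([set s : R | 0 < s] `*` `[a, b]).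
  apply: measurableX => //; rewrite (_ : [set s : R | 0 < s] = `]0, +oo[%classic) //.
  by apply/seteqP; split => x /=; rewrite in_itv /= andbT.
pose f := (fun p : R * R => ((h p.1 p.2) ^+ 2)%:E) \_ ([set s : R | 0 < s] `*` `[a, b]).
have mf : measurable_fun setT f.
  apply/(measurable_restrictT _ _).1 => //.
  by apply/measurable_EFinP; exact: measurable_funX.
have f0 : forall p, (0 <= f p)%E.
  by move=> p; rewrite /f /patch; case: ifP => // _; rewrite lee_fin sqr_ge0.
have mF := @measurable_fun_fubini_tonelli_F _ _ (measurableTypeR R) (measurableTypeR R) R leb f mf f0.
apply: (eq_measurable_fun (fun s => fine (fubini_F leb f s))).
  move=> s; rewrite inE /= in_itv /= andbT => s0.
  rewrite /fubini_F /nrm2 /ip /Rintegral [in RHS]integral_mkcond; congr fine.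
  apply: eq_integral => y _; rewrite /f /patch /=.
  have -> : (((s, y) : R * R) \in [set s : R | 0 < s] `*` `[a, b]) = (y \in `[a, b]%classic).
    by apply/idP/idP => /set_mem H; apply/mem_set; [case: H|split].
  by case: ifP.
exact: (measurableT_comp (@fine_measurable R setT measurableT) (measurable_funS measurableT (@subsetT _ _) mF)).
Qed.
End Meas.
Section Bounds.
Context {R : realType}.
Local Notation leb := (@lebesgue_measure R).

Lemma ip1_bound (a b : R) u du v dv t : a < b -> H10 a b u du -> H10 a b v dv -> 0 < t ->
  `|ip1 a b u du v dv| <= (t * tnorm1sq a b u du + (1 + 3 * (b - a) ^+ 2 / 16) * nrm2 a b dv / t) / 2.
Proof.
move=> ab Hu Hv t0.
have Lu := H10_L2 ab Hu; have Lv := H10_L2 ab Hv.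
have [Ldu _] := Hu; have [Ldv _] := Hv.
rewrite /ip1 /tnorm1sq; apply: le_trans (ler_normD _ _) _.
have h1 := ip_amgm Lu Lv t0; have h2 := ip_amgm Ldu Ldv t0.
have P := poincare ab Hv.
have h3 : nrm2 a b v / t <= 3 * (b - a) ^+ 2 / 16 * nrm2 a b dv / t.
  by rewrite ler_pM2r ?invr_gt0.
have -> : (1 + 3 * (b - a) ^+ 2 / 16) * nrm2 a b dv / t =
  nrm2 a b dv / t + 3 * (b - a) ^+ 2 / 16 * nrm2 a b dv / t by ring.
lra.
Qed.

Lemma outer (mu n g : R -> R) c0 c1 :
  Iab leb `]0%R, +oo[%classic mu -> Iab leb `]0%R, +oo[%classic (fun s => mu s * n s) ->
  (forall s, 0 < s -> `|g s| <= c0 * mu s + c1 * (mu s * n s)) ->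
  `|Rintegral leb `]0%R, +oo[%classic g| <=
    c0 * Rintegral leb `]0%R, +oo[%classic mu + c1 * Rintegral leb `]0%R, +oo[%classic (fun s => mu s * n s).
Proof.
move=> Imu Imn gb.
apply: le_trans.
  apply: (@Rint_abs_le _ _ _ leb _ g (fun s => c0 * mu s + c1 * (mu s * n s))) => //.
    by apply: iD => //; apply: iZ.
  by move=> s /=; rewrite in_itv /= andbT => s0; apply: gb.
rewrite RintegralD //; [|by apply: iZ|by apply: iZ].
by rewrite !RintegralZl.
Qed.

Lemma s_bound (L pi' om e al : R) : 0 < L -> 0 < pi' -> pi' < 4 ->
  om = Num.sqrt ((1 + (pi' / L) ^+ 2) / (pi' / L) ^+ 2) ->
  0 < e -> e < 1 / (2 * om) -> 0 < al -> al <= e * (1 - om * e) ->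
  al <= e /\ (1 + 3 * L ^+ 2 / 16) * (e + al) ^+ 2 <= 2.
Proof.
move=> L0 p0 p4 omE e0 eom a0 aE.
have lam0 : 0 < (pi' / L) ^+ 2 by rewrite exprn_gt0 // divr_gt0.
have om2 : om ^+ 2 = 1 + L ^+ 2 / pi' ^+ 2.
  rewrite omE sqr_sqrtr; last by apply: divr_ge0; [apply: addr_ge0 => //; exact: ltW|exact: ltW].
  by rewrite expr_div_n; field; rewrite ?gt_eqF // ?exprn_gt0.
have om0 : 0 < om.
  rewrite omE sqrtr_gt0 divr_gt0 // ltr_wpDr //; exact: ltW.
have ome : om * e < 1 / 2.
  by move: eom; rewrite ltr_pdivlMr ?mulr_gt0 // mul1r; lra.
have ome0 : 0 < om * e by rewrite mulr_gt0.
split.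
  apply: le_trans aE _; rewrite ler_piMr ?ltW //; lra.
have sb : om * (e + al) <= 3 / 4.
  apply: le_trans (_ : om * (e * (2 - om * e)) <= 3 / 4).
    rewrite ler_pM2l // (_ : e * (2 - om * e) = e + e * (1 - om * e)); last by ring.
    lra.
  have -> : om * (e * (2 - om * e)) = (om * e) * (2 - om * e) by ring.
  nra.
have sb2 : (om * (e + al)) ^+ 2 <= 9 / 16.
  have : 0 <= om * (e + al) by apply: mulr_ge0; [exact: ltW|apply: addr_ge0; exact: ltW].
  nra.
have pL : L ^+ 2 / 16 <= L ^+ 2 / pi' ^+ 2.
  rewrite ler_pM2l ?exprn_gt0 // lef_pV2 ?posrE ?exprn_gt0 //.
  rewrite expr2; nra.
have K : 9 * (1 + 3 * L ^+ 2 / 16) <= 32 * om ^+ 2.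
  rewrite om2; have : 0 <= L ^+ 2 by rewrite sqr_ge0. lra.
rewrite exprMn in sb2.
have om20 : 0 < om ^+ 2 by rewrite exprn_gt0.
set S := (e + al) ^+ 2 in sb2 *.
have S0 : 0 <= S by rewrite sqr_ge0.
set W := om ^+ 2 in sb2 K om20 *.
set K' := 1 + 3 * L ^+ 2 / 16 in K *.
nra.
Qed.
End Bounds.
Arguments ip1_bound {R a b u du v dv t}.
Lemma final_arith {R : realType} (A B Q P I k r e al c K : R) : 0 < r -> r * r = k ->
  0 <= A -> 0 <= B -> 0 <= K -> 0 < al -> al <= e -> (1 + K) * (e + al) ^+ 2 <= 2 ->
  `|P| <= Q + k * B / 4 -> `|I| <= A * r / (e + al) + (1 + K) * (e + al) * r * B / 4 ->
  A + B + 2 / k * P + 2 / k * Q - e / Num.sqrt k * I <= c / e ->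
  A + B + 2 / k * P + 2 / k * Q - al / Num.sqrt k * I <= c / al.
Proof.
move=> r0 rk A0 B0 K0 a0 ae Ks Pb Ib.
have k0 : 0 < k by rewrite -rk mulr_gt0.
have sk : Num.sqrt k = r by rewrite -rk sqrtr_sqr ger0_norm // ltW.
rewrite sk.
have e0 : 0 < e by apply: lt_le_trans ae.
set s := e + al.
have s0 : 0 < s by rewrite /s addr_gt0.
set X := A + B + 2 / k * P + 2 / k * Q.
have XB : A + B / 2 <= X.
  have : - (Q + k * B / 4) <= P by move: Pb; rewrite ler_norml => /andP[].
  move=> HP; have : 2 / k * (- (Q + k * B / 4)) <= 2 / k * P.
    by rewrite ler_pM2l // divr_gt0.
  have -> : 2 / k * (- (Q + k * B / 4)) = - (2 / k * Q) - B / 2.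
    by field; rewrite gt_eqF.
  rewrite /X; lra.
set J := I / r.
have eJ : forall x, x / r * I = x * J by move=> x; rewrite /J; field; rewrite gt_eqF.
rewrite !eJ.
have sJ : s * J <= A + B / 2.
  apply: le_trans (_ : s * `|J| <= _); first by rewrite ler_pM2l // ler_norm.
  have : `|J| <= (A * r / s + (1 + K) * s * r * B / 4) / r.
    have ri : 0 <= r^-1 by rewrite invr_ge0 ltW.
    by rewrite /J normrM (ger0_norm ri) ler_pM2r ?invr_gt0.
  rewrite -(ler_pM2l s0) => H; apply: le_trans H _.
  have -> : s * ((A * r / s + (1 + K) * s * r * B / 4) / r) = A + ((1 + K) * s ^+ 2) * B / 4.
    by field; rewrite !gt_eqF.
  have : (1 + K) * s ^+ 2 * B <= 2 * B by rewrite ler_wpM2r.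
  lra.
move=> H; rewrite ler_pdivlMr //; move: H; rewrite ler_pdivlMr // => H.
apply: le_trans H.
rewrite -subr_ge0.
have -> : (X - e * J) * e - (X - al * J) * al = (e - al) * (X - s * J) by rewrite /s; ring.
by apply: mulr_ge0; rewrite subr_ge0 //; apply: le_trans sJ XB.
Qed.
Theorem lemma8p3 (R : realType) (a b : R) (f mu : R -> R)
  (delta c1 c2 c3 eps0 eps alpha : R) :
  a < b -> L2 a b f -> kernel_ok mu delta ->
  0 < c1 -> 0 < c2 -> 0 < c3 ->
  0 < eps0 -> eps0 < 1 / (2 * omega a b) ->
  normF a b f < c1 / (2 * Num.sqrt (c2 * c3)) ->
  0 < eps <= eps0 ->
  0 < alpha <= eps * (1 - omega a b * eps) ->
  Dset mu a b f c1 c2 c3 eps `<=` Dset mu a b f c1 c2 c3 alpha.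
Proof.
move=> ab Lf kok c10 c20 c30 e00 e0w nF /andP[e0 ee0] /andP[a0 aE] z [Hz Lz].
split => //.
have [Hu [Heta [meta [mdeta fin]]]] := Hz.
have [mu0 [_ [_ [Imu [k0 _]]]]] := kok.
pose n := fun s => nrm2 a b (st_deta z s).
have mmu : measurable_fun (`]0%R, +oo[%classic : set R) mu.
  by case/integrableP: Imu => /measurable_EFinP.
have mn : measurable_fun (`]0%R, +oo[%classic : set R) n := n_meas _ _ _ mdeta.
have Imn : Iab (@lebesgue_measure R) `]0%R, +oo[%classic (fun s => mu s * n s).
  apply/integrableP; split; first by apply/measurable_EFinP; exact: measurable_funM.
  apply: le_lt_trans fin; rewrite le_eqVlt; apply/orP; left; apply/eqP.
  apply: eq_integral => s; rewrite inE /= in_itv /= andbT => s0.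
  by rewrite ger0_norm // mulr_ge0 ?mu0 // nrm2_ge0.
have Imu' : Iab (@lebesgue_measure R) `]0%R, +oo[%classic mu by exact: Imu.
set k := kappa mu.
set B := normMsq mu a b z.
have BE : B = Rintegral (@lebesgue_measure R) `]0%R, +oo[%classic (fun s => mu s * n s) by [].
have kE : k = Rintegral (@lebesgue_measure R) `]0%R, +oo[%classic mu by [].
set A := tnorm1sq a b (st_u z) (st_du z).
set Q := nrm2 a b (primF a f).
have LF : L2 a b (primF a f) := prim_L2 ab Lf (fun x _ => erefl).
set P := Rintegral (@lebesgue_measure R) `]0%R, +oo[%classic (fun s => mu s * ip a b (primF a f) (st_deta z s)).
set I := Rintegral (@lebesgue_measure R) `]0%R, +oo[%classic
  (fun s => mu s * ip1 a b (st_u z) (st_du z) (st_eta z s) (st_deta z s)).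
set K := 3 * (b - a) ^+ 2 / 16.
have K0 : 0 <= K by rewrite /K divr_ge0 // mulr_ge0 // sqr_ge0.
have Pb : forall w, 0 < w -> `|P| <= w * Q / 2 * k + 1 / (2 * w) * B.
  move=> w t0; rewrite kE BE; apply: outer => // s s0.
  have [Ld _] := Heta s s0.
  rewrite normrM ger0_norm ?mu0 //.
  have := ip_amgm LF Ld t0; rewrite -/Q -/(n s) => h.
  apply: le_trans (ler_wpM2l (mu0 s s0) h) _.
  rewrite le_eqVlt; apply/orP; left; apply/eqP; field; exact: lt0r_neq0.
have Ib : forall w, 0 < w -> `|I| <= w * A / 2 * k + (1 + K) / (2 * w) * B.
  move=> w t0; rewrite kE BE; apply: outer => // s s0.
  have h := ip1_bound ab Hu (Heta s s0) t0.
  rewrite normrM ger0_norm ?mu0 //.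
  rewrite -/A -/(n s) -/K in h.
  apply: le_trans (ler_wpM2l (mu0 s s0) h) _.
  rewrite le_eqVlt; apply/orP; left; apply/eqP; field; exact: lt0r_neq0.
set r := Num.sqrt k.
have r0 : 0 < r by rewrite sqrtr_gt0.
have rk : r * r = k by rewrite -expr2 sqr_sqrtr // ltW.
have pi4 : pi < 4 :> R by have := @pihalf_lt2 R; lra.
have ba0 : 0 < b - a by rewrite subr_gt0.
have [ae Ks] := @s_bound R (b - a) pi (omega a b) eps alpha ba0 (@pi_gt0 R) pi4 erefl e0
   (le_lt_trans ee0 e0w) a0 aE.
have B0 : 0 <= B by rewrite BE; apply: Rintegral_ge0 => s /=; rewrite in_itv /= andbT => s0; rewrite mulr_ge0 ?mu0 // nrm2_ge0.
have A0 : 0 <= A by rewrite /A /tnorm1sq addr_ge0 // nrm2_ge0.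
have s0 : 0 < eps + alpha by rewrite addr_gt0.
rewrite /Lambda /normHsq /= -/A -/B -/k -/Q -/P -/I -/r.
apply: (@final_arith R A B Q P I k r eps alpha _ K) => //.
- have := Pb (2 / k) (divr_gt0 (_ : (0:R) < 2) k0).
  have -> : 2 / k * Q / 2 * k + 1 / (2 * (2 / k)) * B = Q + k * B / 4 by field; rewrite gt_eqF.
  by apply.
- have := Ib (2 / ((eps + alpha) * r)) (divr_gt0 (_ : (0:R) < 2) (mulr_gt0 s0 r0)).
  have -> : 2 / ((eps + alpha) * r) * A / 2 * k + (1 + K) / (2 * (2 / ((eps + alpha) * r))) * B
    = A * r / (eps + alpha) + (1 + K) * (eps + alpha) * r * B / 4.
    by rewrite -rk; field; rewrite !gt_eqF.
  by apply.
Qed.
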